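(* Let $c,d\in\mathbb{R}$ with $c,d>0$. Then: (1) Let $j\in\mathbb{R}$ with $j>0$. The running time of Quicksort in the worst case, i.e. the unique solution $T\in\mathcal{RT}_c$ of $T(1)=c$, $T(n)=T(n-1)+jn$ for $n\ge2$, belongs to $\mathcal{O}(g_k)$, where $k=\max\left(\frac c4+\frac j2,\frac{3j}{5}\right)$ and, for $r>0$, $g_r(1)=c$ and $g_r(n)=rn^2$ for $n\ge2$. (2) The running time of Largetwo in the average case, i.e. the unique solution $T\in\mathcal{RT}_c$ of $T(1)=c$, $T(n)=T(n-1)+2-\frac1n$ for $n\ge2$, belongs to $\mathcal{O}(g_k)$, where $k=\max\left(\frac{2c+3}{2+2d},1\right)$ and, for $r>0$, $g_r(1)=c$ and $g_r(n)=r\,(2(n-1)-\log_2 n+d)$ for $n\ge2$.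
   Context: $\mathbb{N}$ is the set of positive integers, $\mathcal{RT}$ the set of functions $\mathbb{N}\to(0,\infty]$, and $\mathcal{RT}_c=\{f\in\mathcal{RT}:f(1)=c\}$. For $f,g\in\mathcal{RT}$, $f\in\mathcal{O}(g)$ means there exist $n_0\in\mathbb{N}$ and $C\ge0$ with $f(n)\le Cg(n)$ for all $n\ge n_0$. The running times of these algorithms as functions of input size $n$ are modeled as the solutions of the stated recurrences, with $c$ the cost of the base case (Largetwo finds the two largest entries of an array of size $n$). *)

(* Defs.v *)
From Stdlib Require Import Reals Lra Lia.
Open Scope R_scope.

(* Running times are indexed by positive integers; we use nat and only
   ever look at arguments n >= 1 (the value at 0 is irrelevant). *)

Definition bigO (f g : nat -> R) : Prop :=
  exists (n0 : nat) (C : R), (1 <= n0)%nat /\ 0 <= C /\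
    forall n : nat, (n0 <= n)%nat -> f n <= C * g n.

Definition log2 (x : R) : R := ln x / ln 2.

Definition g_quick (c r : R) (n : nat) : R :=
  if Nat.eqb n 1 then c else r * (INR n) ^ 2.

Definition g_large (c d r : R) (n : nat) : R :=
  if Nat.eqb n 1 then c else r * (2 * (INR n - 1) - log2 (INR n) + d).

(* Main.v *)
Require Import Defs.
From Stdlib Require Import Reals Lra Lia.
Open Scope R_scope.

Lemma pow2_ge (m : nat) : INR (S m) <= 2 ^ m.
Proof.
  induction m as [|m IH]; simpl pow. simpl; lra.
  rewrite S_INR. assert (1 <= 2 ^ m) by (apply pow_R1_Rle; lra). lra.
Qed.

Lemma log2_le (m : nat) : log2 (INR (S m)) <= INR m.
Proof.
  unfold log2. assert (Hl : 0 < ln 2) by (rewrite <- ln_1; apply ln_increasing; lra).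
  apply (Rmult_le_reg_r (ln 2)); auto.
  unfold Rdiv; rewrite Rmult_assoc, Rinv_l, Rmult_1_r by lra.
  rewrite <- ln_pow by lra.
  destruct (Rle_lt_or_eq_dec _ _ (pow2_ge m)) as [h|h].
  apply Rlt_le, ln_increasing; auto. apply lt_0_INR; lia.
  rewrite h; lra.
Qed.

Theorem corollary13 (c d : R) (hc : 0 < c) (hd : 0 < d) :
  (forall (j : R), 0 < j ->
     forall T : nat -> R,
       T 1%nat = c ->
       (forall n : nat, (2 <= n)%nat -> T n = T (n - 1)%nat + j * INR n) ->
       bigO T (g_quick c (Rmax (c / 4 + j / 2) (3 * j / 5))))
  /\
  (forall T : nat -> R,
     T 1%nat = c ->
     (forall n : nat, (2 <= n)%nat -> T n = T (n - 1)%nat + 2 - 1 / INR n) ->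
     bigO T (g_large c d (Rmax ((2 * c + 3) / (2 + 2 * d)) 1))).
Proof.
  split.
  - intros j hj T T1 TS.
    set (k := Rmax (c / 4 + j / 2) (3 * j / 5)).
    assert (hk : 0 < k) by (unfold k; pose proof (Rmax_r (c / 4 + j / 2) (3 * j / 5)); lra).
    assert (B : forall m, T (S m) <= (c + j) * INR (S m) ^ 2).
    { induction m as [|m IH]. rewrite T1; simpl; lra.
      rewrite TS by lia. replace (S (S m) - 1)%nat with (S m) by lia.
      rewrite (S_INR (S m)). pose proof (pos_INR m). rewrite S_INR in *. nra. }
    exists 2%nat, ((c + j) / k). split; [lia|]. split.
    + apply Rlt_le, Rdiv_lt_0_compat; lra.
    + intros n hn. unfold g_quick. destruct n as [|n]; [lia|].
      replace (Nat.eqb (S n) 1) with false by (symmetry; apply Nat.eqb_neq; lia).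
      replace ((c + j) / k * (k * INR (S n) ^ 2)) with ((c + j) * INR (S n) ^ 2)
        by (field; lra). apply B.
  - intros T T1 TS.
    set (k := Rmax ((2 * c + 3) / (2 + 2 * d)) 1).
    assert (hk : 1 <= k) by apply Rmax_r.
    assert (B : forall m, T (S m) <= c + 2 * INR m).
    { induction m as [|m IH]. rewrite T1; simpl; lra.
      rewrite TS by lia. replace (S (S m) - 1)%nat with (S m) by lia.
      assert (0 <= 1 / INR (S (S m))).
      { apply Rlt_le, Rdiv_lt_0_compat; [lra|apply lt_0_INR; lia]. }
      rewrite (S_INR m). lra. }
    exists 2%nat, ((c + 2) / k). split; [lia|]. split.
    + apply Rlt_le, Rdiv_lt_0_compat; lra.
    + intros n hn. unfold g_large. destruct n as [|n]; [lia|].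
      replace (Nat.eqb (S n) 1) with false by (symmetry; apply Nat.eqb_neq; lia).
      pose proof (log2_le n). pose proof (B n).
      assert (1 <= INR n) by (apply (le_INR 1); lia).
      rewrite S_INR in *.
      replace ((c + 2) / k * (k * (2 * (INR n + 1 - 1) - log2 (INR n + 1) + d)))
        with ((c + 2) * (2 * (INR n + 1 - 1) - log2 (INR n + 1) + d)) by (field; lra).
      nra.
Qed.
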